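(* $U_{2,4}\oplus U_{2,4}$ is an excluded minor for $\mathcal M_2$: it is not in $\mathcal M_2$, but every proper minor of it is in $\mathcal M_2$.
   Context: An integer matrix $A$ is $\Delta$-modular if the determinant of every $\operatorname{rank}(A)\times\operatorname{rank}(A)$ submatrix has absolute value at most $\Delta$. $\mathcal M_2$ is the class of matroids isomorphic to the real vector matroid of the columns of some $2$-modular matrix. *)

(* Defs.v *)
From HB Require Import structures.
From mathcomp Require Import all_boot all_order all_algebra.
From mathcomp Require Import Rstruct.
From Stdlib Require Rdefinitions.
Set Implicit Arguments. Unset Strict Implicit. Unset Printing Implicit Defensive.
Import Order.TTheory GRing.Theory Num.Theory.
Local Open Scope ring_scope.

(* A matroid on a finite ground set T (the whole type) is given by its
   independence predicate on subsets of T. *)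

Definition matroid_iso (T1 T2 : finType) (I1 : {set T1} -> bool)
  (I2 : {set T2} -> bool) : Prop :=
  exists f : T1 -> T2, bijective f /\ forall X : {set T1}, I1 X = I2 (f @: X).

Definition real_vector_matroid (m n : nat) (A : 'M[int]_(m, n))
  (X : {set 'I_n}) : bool :=
  (\rank (colsub (fun i : 'I_#|X| => enum_val i) (map_mx (intr : int -> Rdefinitions.R) A))
    == #|X|)%N.

Definition Delta_modular (Delta : nat) (m n : nat) (A : 'M[int]_(m, n)) : Prop :=
  let r := \rank (map_mx (intr : int -> Rdefinitions.R) A) in
  forall (f : 'I_r -> 'I_m) (g : 'I_r -> 'I_n),
    injective f -> injective g -> `|\det (mxsub f g A)| <= Delta%:Z.

Definition in_M2 (T : finType) (I : {set T} -> bool) : Prop :=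
  exists (m n : nat) (A : 'M[int]_(m, n)),
    Delta_modular 2 A /\ matroid_iso I (@real_vector_matroid m n A).

Definition uniform_matroid (r n : nat) (X : {set 'I_n}) : bool := (#|X| <= r)%N.

Definition direct_sum (T1 T2 : finType) (I1 : {set T1} -> bool)
  (I2 : {set T2} -> bool) (X : {set T1 + T2}) : bool :=
  I1 [set x | inl x \in X] && I2 [set y | inr y \in X].

(* Minor M / C \ D on the ground set T - (C u D): a set X is independent iff
   X u B is independent in M for a basis (maximal independent subset) B of C. *)
Definition minor_ground (T : finType) (C D : {set T}) :=
  {x : T | x \notin C :|: D}.

Definition minor (T : finType) (I : {set T} -> bool) (C D : {set T})
  (X : {set minor_ground C D}) : bool :=
  [exists B : {set T},
     [&& B \subset C, I B,
         [forall B' : {set T}, [&& B \subset B', B' \subset C & I B'] ==> (B' == B)]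
       & I ((fun x : minor_ground C D => val x) @: X :|: B)]].

Definition U24_plus_U24 : {set 'I_4 + 'I_4} -> bool :=
  direct_sum (@uniform_matroid 2%N 4%N) (@uniform_matroid 2%N 4%N).

Arguments minor [T] I C D X.

(* Main.v *)
Require Import Defs.
From mathcomp Require Import all_boot all_order all_algebra.
From HB Require Import structures.
From mathcomp Require Import ring lra zify.
From mathcomp Require Import Rstruct.
Set Implicit Arguments. Unset Strict Implicit. Unset Printing Implicit Defensive.
Import Order.TTheory GRing.Theory Num.Theory.
Local Open Scope ring_scope.

Section RankLemmas.
Variable F : fieldType.

Lemma rowsub_le p n k k' (N : 'M[F]_(n,p)) (g : 'I_k -> 'I_n) (h : 'I_k' -> 'I_n) :
  (forall i, exists i', g i = h i') -> (rowsub g N <= rowsub h N)%MS.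
Proof.
move=> H; apply/row_subP => i; rewrite row_rowsub; have [i' ->] := H i.
rewrite -row_rowsub; exact: row_sub.
Qed.

Lemma rank_rowsub_eq p n k k' (N : 'M[F]_(n,p)) (g : 'I_k -> 'I_n) (h : 'I_k' -> 'I_n) :
  (forall i, exists i', g i = h i') -> (forall i', exists i, h i' = g i) ->
  \rank (rowsub g N) = \rank (rowsub h N).
Proof.
move=> H1 H2; apply/eqP; rewrite eqn_leq !mxrankS //; exact: rowsub_le.
Qed.

Definition rk n p (N : 'M[F]_(n,p)) (Y : {set 'I_n}) :=
  \rank (rowsub (fun i : 'I_#|Y| => enum_val i) N).

Lemma rk_img n p k (N : 'M[F]_(n,p)) (g : 'I_k -> 'I_n) :
  \rank (rowsub g N) = rk N [set g i | i in 'I_k].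
Proof.
apply: rank_rowsub_eq => [i|i'].
  have Hg : g i \in [set g i | i in 'I_k] by apply: imset_f.
  by exists (enum_rank_in Hg (g i)); rewrite enum_rankK_in.
have := enum_valP i'; case/imsetP => i _ ->; by exists i.
Qed.

Lemma rk_le n p (N : 'M[F]_(n,p)) Y : (rk N Y <= #|Y|)%N.
Proof. exact: rank_leq_row. Qed.

Lemma rank_sel m n k r (B : 'M[F]_(m,n)) (rsel : 'I_r -> 'I_m)
  (Hs : (B <= rowsub rsel B)%MS) (g : 'I_k -> 'I_n) :
  \rank (mxsub rsel g B) = \rank (rowsub g B^T).
Proof.
rewrite -mxrank_tr trmx_mxsub; apply/eqP; rewrite eqn_leq; apply/andP; split.
  rewrite mxsubcr.
  have -> : colsub rsel (rowsub g B^T) = rowsub g B^T *m colsub rsel 1%:M.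
    by rewrite mulmx_colsub mulmx1.
  exact: mxrankM_maxl.
case/submxP: Hs => K HK.
have -> : rowsub g B^T = mxsub g rsel B^T *m K^T.
  by rewrite {1}HK trmx_mul -mul_rowsub_mx trmx_mxsub -mxsubrc.
exact: mxrankM_maxl.
Qed.

Lemma rank_full_rows k p (V : 'M[F]_(k,p)) :
  (\rank V == k) <-> (forall v : 'rV_k, v *m V = 0 -> v = 0).
Proof.
split=> [Hf v Hv|H].
  have := Hf; rewrite -/(row_free V) => /row_free_inj Hi.
  by apply: Hi; rewrite Hv mul0mx.
rewrite -/(row_free V) -kermx_eq0; apply/eqP/row_matrixP => i.
rewrite row0; apply: H.
by apply/sub_kermxP; rewrite row_sub.
Qed.

End RankLemmas.

Lemma rvm_rank m n (A : 'M[int]_(m,n)) (Y : {set 'I_n}) :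
  real_vector_matroid A Y = (rk (map_mx (intr : int -> Rdefinitions.R) A)^T Y == #|Y|).
Proof. by rewrite /real_vector_matroid /rk -mxrank_tr trmx_mxsub. Qed.

Lemma det2E (R : comNzRingType) (A : 'M[R]_2) (B : nat -> nat -> R) :
  (forall i j : 'I_2, A i j = B i j) ->
  \det A = B 0 0 * B 1 1 - B 0 1 * B 1 0.
Proof.
move=> HB.
rewrite (expand_det_row _ 0) !big_ord_recl big_ord0 /cofactor !det_mx11 !mxE !HB /=.
ring.
Qed.

Lemma det3E (R : comNzRingType) (A : 'M[R]_3) (B : nat -> nat -> R) :
  (forall i j : 'I_3, A i j = B i j) ->
  \det A = B 0 0 * (B 1 1 * B 2 2 - B 1 2 * B 2 1)
         - B 0 1 * (B 1 0 * B 2 2 - B 1 2 * B 2 0)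
         + B 0 2 * (B 1 0 * B 2 1 - B 1 1 * B 2 0).
Proof.
move=> HB.
have d2 := fun (M : 'M[R]_2) => det2E (B := fun a b => M (inord a) (inord b)) (fun i j => (congr2 M (esym (inord_val i)) (esym (inord_val j)))).
rewrite (expand_det_row _ 0) !big_ord_recl big_ord0 /cofactor !d2 !mxE !HB /=.
rewrite !inordK //=.
ring.
Qed.

Lemma det4E (R : comNzRingType) (A : 'M[R]_4) (B : nat -> nat -> R) :
  (forall i j : 'I_4, A i j = B i j) ->
  \det A = 
    B 0 0 * (B 1 1 * (B 2 2 * B 3 3 - B 2 3 * B 3 2) - B 1 2 * (B 2 1 * B 3 3 - B 2 3 * B 3 1) + B 1 3 * (B 2 1 * B 3 2 - B 2 2 * B 3 1))
  - B 0 1 * (B 1 0 * (B 2 2 * B 3 3 - B 2 3 * B 3 2) - B 1 2 * (B 2 0 * B 3 3 - B 2 3 * B 3 0) + B 1 3 * (B 2 0 * B 3 2 - B 2 2 * B 3 0))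
  + B 0 2 * (B 1 0 * (B 2 1 * B 3 3 - B 2 3 * B 3 1) - B 1 1 * (B 2 0 * B 3 3 - B 2 3 * B 3 0) + B 1 3 * (B 2 0 * B 3 1 - B 2 1 * B 3 0))
  - B 0 3 * (B 1 0 * (B 2 1 * B 3 2 - B 2 2 * B 3 1) - B 1 1 * (B 2 0 * B 3 2 - B 2 2 * B 3 0) + B 1 2 * (B 2 0 * B 3 1 - B 2 1 * B 3 0)).
Proof.
move=> HB.
have d3 := fun (M : 'M[R]_3) => det3E (B := fun a b => M (inord a) (inord b)) (fun i j => (congr2 M (esym (inord_val i)) (esym (inord_val j)))).
rewrite (expand_det_row _ 0) !big_ord_recl big_ord0 /cofactor !d3 !mxE !HB /=.
rewrite !inordK //=.
ring.
Qed.

Section E.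
Variable R : comNzRingType.
Definition Ef (c0 c1 c2 c3 : nat -> R) : R :=
  let B i j := (match j with 0%N => c0 | 1%N => c1 | 2%N => c2 | _ => c3 end) i in
    B 0 0 * (B 1 1 * (B 2 2 * B 3 3 - B 2 3 * B 3 2) - B 1 2 * (B 2 1 * B 3 3 - B 2 3 * B 3 1) + B 1 3 * (B 2 1 * B 3 2 - B 2 2 * B 3 1))
  - B 0 1 * (B 1 0 * (B 2 2 * B 3 3 - B 2 3 * B 3 2) - B 1 2 * (B 2 0 * B 3 3 - B 2 3 * B 3 0) + B 1 3 * (B 2 0 * B 3 2 - B 2 2 * B 3 0))
  + B 0 2 * (B 1 0 * (B 2 1 * B 3 3 - B 2 3 * B 3 1) - B 1 1 * (B 2 0 * B 3 3 - B 2 3 * B 3 0) + B 1 3 * (B 2 0 * B 3 1 - B 2 1 * B 3 0))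
  - B 0 3 * (B 1 0 * (B 2 1 * B 3 2 - B 2 2 * B 3 1) - B 1 1 * (B 2 0 * B 3 2 - B 2 2 * B 3 0) + B 1 2 * (B 2 0 * B 3 1 - B 2 1 * B 3 0)).

Lemma Ef_swap01 c0 c1 c2 c3 : Ef c1 c0 c2 c3 = - Ef c0 c1 c2 c3.
Proof. rewrite /Ef /=. ring. Qed.
Lemma Ef_swap23 c0 c1 c2 c3 : Ef c0 c1 c3 c2 = - Ef c0 c1 c2 c3.
Proof. rewrite /Ef /=. ring. Qed.
Lemma Ef_swap12 c0 c1 c2 c3 : Ef c0 c2 c1 c3 = - Ef c0 c1 c2 c3.
Proof. rewrite /Ef /=. ring. Qed.
Lemma Ef_plucker p q i j k l :
  Ef p q i j * Ef p q k l - Ef p q i k * Ef p q j l + Ef p q i l * Ef p q j k = 0.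
Proof. rewrite /Ef /=. ring. Qed.
Lemma Ef_rot c0 c1 c2 c3 : Ef c2 c3 c0 c1 = Ef c0 c1 c2 c3.
Proof. rewrite /Ef /=. ring. Qed.
End E.

Lemma abs_eq_cases (y c : int) : `|y| = c -> y = c \/ y = - c.
Proof. lia. Qed.

Lemma nonconst6 (y1 y2 y3 y4 y5 y6 c : int) :
  c != 0 -> `|y1| = c -> `|y2| = c -> `|y3| = c -> `|y4| = c -> `|y5| = c -> `|y6| = c ->
  y1 * y2 - y3 * y4 + y5 * y6 != 0.
Proof.
move=> c0 h1 h2 h3 h4 h5 h6.
have P : forall y z, `|y| = c -> `|z| = c -> y * z = c * c \/ y * z = - (c * c).
  move=> y z /abs_eq_cases [->|->] /abs_eq_cases [->|->]; 
    [left|right|right|left]; ring.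
have cc : c * c != 0 by rewrite mulf_neq0.
move: cc; set d := c * c => cc.
have [->|->] := P _ _ h1 h2; have [->|->] := P _ _ h3 h4; have [->|->] := P _ _ h5 h6; lia.
Qed.

Section Comb.
Variable E : 'I_4 -> 'I_4 -> 'I_4 -> 'I_4 -> int.
Variables o0 o1 o2 o3 : 'I_4.
Hypotheses (h01 : o0 != o1) (h02 : o0 != o2) (h03 : o0 != o3) (h12 : o1 != o2) (h13 : o1 != o3) (h23 : o2 != o3).
Hypothesis Hs1 : forall a b t u, E b a t u = - E a b t u.
Hypothesis Hs2 : forall a b t u, E a b u t = - E a b t u.
Hypothesis Hb : forall a b t u, a != b -> t != u -> E a b t u != 0 /\ `|E a b t u| <= 2.
Hypothesis HR : forall a b c t u v, E a b t v * E a c t u = E a b t u * E a c t v.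
Hypothesis HPA : forall t u, E o0 o1 t u * E o2 o3 t u - E o0 o2 t u * E o1 o3 t u + E o0 o3 t u * E o1 o2 t u = 0.
Hypothesis HPB : forall a b, E a b o0 o1 * E a b o2 o3 - E a b o0 o2 * E a b o1 o3 + E a b o0 o3 * E a b o1 o2 = 0.

Let X a b t u := `|E a b t u|.

Lemma X1 a b t u : X b a t u = X a b t u.
Proof. by rewrite /X Hs1 normrN. Qed.
Lemma X2 a b t u : X a b u t = X a b t u.
Proof. by rewrite /X Hs2 normrN. Qed.
Lemma Xb a b t u : a != b -> t != u -> 1 <= X a b t u <= 2.
Proof. move=> h1 h2; have [h3 h4] := Hb h1 h2; rewrite /X; lia. Qed.
Lemma XR a b c t u v : X a b t v * X a c t u = X a b t u * X a c t v.
Proof. by rewrite /X -!normrM HR. Qed.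

Lemma cancel_pos (x y z : int) : 0 < z -> x * z = y * z -> x = y.
Proof. move=> hz h; apply: (mulIf (x := z)); [lia | exact h]. Qed.

Lemma H1 a b c t u v w : a != b -> a != c -> t != u -> v != w ->
  X a b t u * X a c v w = X a b v w * X a c t u.
Proof.
move=> hab hac htu hvw.
have [<-|htv] := eqVneq t v.
  by rewrite (XR a b c t w u).
have R1 := XR a b c t u v.
have R2 := XR a b c v w t.
rewrite (X2 a b t v) (X2 a c t v) in R2.
have hM1 := Xb hab htv; have hM2 := Xb hac htv.
apply: (@cancel_pos _ _ (X a b t v * X a c t v)); first by lia.
have E1 : X a b t u * X a c v w * (X a b t v * X a c t v)
        = (X a b t u * X a c t v) * (X a b t v * X a c v w) by ring.
rewrite E1 -R1 R2; ring.
Qed.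

Lemma G a b c d t u v w : a != b -> c != d -> t != u -> v != w ->
  X a b t u * X c d v w = X a b v w * X c d t u.
Proof.
move=> hab hcd htu hvw.
have [e|hac] := eqVneq a c; first by subst c; apply: H1.
have S1 := H1 hab hac htu hvw.
have hca : c != a by rewrite eq_sym.
have S2 := H1 hca hcd htu hvw.
rewrite (X1 a c t u) (X1 a c v w) in S2.
have h1 := Xb hac htu; have h2 := Xb hac hvw.
apply: (@cancel_pos _ _ (X a c t u * X a c v w)); first by lia.
have E1 : X a b t u * X c d v w * (X a c t u * X a c v w)
   = (X a b t u * X a c v w) * (X a c t u * X c d v w) by ring.
rewrite E1 S1 S2; ring.
Qed.

Lemma comb_false : False.
Proof.
have B a b : a != b -> 1 <= X a b o0 o1 <= 2 by move=> h; exact: Xb.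
have e2 : exists a b, [/\ a != b & X a b o0 o1 = 2].
  have hb := (B _ _ h01, B _ _ h23, B _ _ h02, B _ _ h13, B _ _ h03, B _ _ h12).
  case: hb => [[[[[b1 b2] b3] b4] b5] b6].
  have [e|n1] := eqVneq (X o0 o1 o0 o1) 2; first by exists o0, o1.
  have [e|n2] := eqVneq (X o2 o3 o0 o1) 2; first by exists o2, o3.
  have [e|n3] := eqVneq (X o0 o2 o0 o1) 2; first by exists o0, o2.
  have [e|n4] := eqVneq (X o1 o3 o0 o1) 2; first by exists o1, o3.
  have [e|n5] := eqVneq (X o0 o3 o0 o1) 2; first by exists o0, o3.
  have [e|n6] := eqVneq (X o1 o2 o0 o1) 2; first by exists o1, o2.
  exfalso; have := HPA o0 o1; apply/eqP.
  apply: (@nonconst6 _ _ _ _ _ _ 1) => //; rewrite -/(X _ _ _ _); lia.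
have e1 : exists a b, [/\ a != b & X a b o0 o1 = 1].
  have hb := (B _ _ h01, B _ _ h23, B _ _ h02, B _ _ h13, B _ _ h03, B _ _ h12).
  case: hb => [[[[[b1 b2] b3] b4] b5] b6].
  have [e|n1] := eqVneq (X o0 o1 o0 o1) 1; first by exists o0, o1.
  have [e|n2] := eqVneq (X o2 o3 o0 o1) 1; first by exists o2, o3.
  have [e|n3] := eqVneq (X o0 o2 o0 o1) 1; first by exists o0, o2.
  have [e|n4] := eqVneq (X o1 o3 o0 o1) 1; first by exists o1, o3.
  have [e|n5] := eqVneq (X o0 o3 o0 o1) 1; first by exists o0, o3.
  have [e|n6] := eqVneq (X o1 o2 o0 o1) 1; first by exists o1, o2.
  exfalso; have := HPA o0 o1; apply/eqP.
  apply: (@nonconst6 _ _ _ _ _ _ 2) => //; rewrite -/(X _ _ _ _); lia.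
case: e2 => a1 [b1 [hab1 Xe1]]; case: e1 => a2 [b2 [hab2 Xe2]].
have all2 t u : t != u -> X a1 b1 t u = 2.
  move=> htu; have := G hab1 hab2 htu h01; rewrite Xe1 Xe2.
  have := Xb hab1 htu; have := Xb hab2 htu; lia.
have := HPB a1 b1; apply/eqP.
apply: (@nonconst6 _ _ _ _ _ _ 2) => //; rewrite -/(X _ _ _ _); exact: all2.
Qed.

End Comb.

Definition T4 : finType := ('I_4 + 'I_4)%type.
Definition lft (Z : {set T4}) : {set 'I_4} := [set x | inl x \in Z].
Definition rgt (Z : {set T4}) : {set 'I_4} := [set x | inr x \in Z].
Definition isl (x : T4) : bool := if x is inl _ then true else false.

Lemma U_E Z : U24_plus_U24 Z = (#|lft Z| <= 2)%N && (#|rgt Z| <= 2)%N.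
Proof. by []. Qed.

Lemma inl_inj' : injective (@inl 'I_4 'I_4). Proof. by move=> x y [->]. Qed.
Lemma inr_inj' : injective (@inr 'I_4 'I_4). Proof. by move=> x y [->]. Qed.

Lemma card_lr (Z : {set T4}) : #|Z| = (#|lft Z| + #|rgt Z|)%N.
Proof.
rewrite -(cardsID [set x : T4 | isl x] Z).
have -> : Z :&: [set x | isl x] = inl @: lft Z.
  apply/setP => x; rewrite !inE; case: x => a /=.
    by rewrite mem_imset ?inE ?andbT //; exact: inl_inj'.
  rewrite andbF; apply/esym/imsetP => [[b _ //]].
have -> : Z :\: [set x | isl x] = inr @: rgt Z.
  apply/setP => x; rewrite !inE; case: x => a /=.
    apply/esym/imsetP => [[b _ //]].
  by rewrite mem_imset ?inE ?andbT //; exact: inr_inj'.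
by rewrite !card_imset //; [exact: inr_inj' | exact: inl_inj'].
Qed.

Definition o0 : 'I_4 := @Ordinal 4 0 isT.
Definition o1 : 'I_4 := @Ordinal 4 1 isT.
Definition o2 : 'I_4 := @Ordinal 4 2 isT.
Definition o3 : 'I_4 := @Ordinal 4 3 isT.

Lemma set4E (x0 x1 x2 x3 : T4) :
  [set tnth [tuple x0; x1; x2; x3] i | i : 'I_4] = [set x0; x1; x2; x3].
Proof.
apply/setP => y; rewrite !inE; apply/imsetP/idP.
  by case=> -[[|[|[|[|i]]]] Hi] //= _ ->; rewrite /tnth /= eqxx ?orbT.
by case/orP => [/orP[/orP[]|]|] /eqP ->; [exists o0|exists o1|exists o2|exists o3].
Qed.

Lemma eq_ll (x y : 'I_4) : (inl x == inl y :> T4) = (x == y). Proof. by []. Qed.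
Lemma eq_rr (x y : 'I_4) : (inr x == inr y :> T4) = (x == y). Proof. by []. Qed.
Lemma eq_lr (x y : 'I_4) : (inl x == inr y :> T4) = false. Proof. by []. Qed.
Lemma eq_rl (x y : 'I_4) : (inr x == inl y :> T4) = false. Proof. by []. Qed.
Definition eqsE := (eq_ll, eq_rr, eq_lr, eq_rl).

Lemma lft4 (a b t u : 'I_4) : lft [set inl a; inl b; inr t; inr u] = [set a; b].
Proof. by apply/setP => x; rewrite !inE !eqsE !orbF. Qed.
Lemma rgt4 (a b t u : 'I_4) : rgt [set inl a; inl b; inr t; inr u] = [set t; u].
Proof. by apply/setP => x; rewrite !inE !eqsE. Qed.

Section Part1.
Variables (m n : nat) (A : 'M[int]_(m,n)) (phi : T4 -> 'I_n).
Hypothesis phi_inj : injective phi.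
Hypothesis HI : forall X, U24_plus_U24 X = real_vector_matroid A (phi @: X).
Local Notation B := (map_mx (intr : int -> Rdefinitions.R) A).

Lemma U_rk Z : U24_plus_U24 Z = (rk B^T (phi @: Z) == #|Z|).
Proof. by rewrite HI rvm_rank card_imset. Qed.

Lemma rank_img k (xs : 'I_k -> T4) :
  \rank (rowsub (phi \o xs) B^T) = rk B^T (phi @: [set xs i | i : 'I_k]).
Proof. by rewrite rk_img -imset_comp. Qed.

Lemma card4_le (xs : 'I_4 -> T4) : (#|[set xs i | i : 'I_4]| <= 4)%N.
Proof. by rewrite (leq_trans (leq_imset_card _ _)) // card_ord. Qed.

Section Sel.
Variable rsel : 'I_4 -> 'I_m.
Hypothesis Hsel : (B <= rowsub rsel B)%MS.

Definition Ex (xs : 'I_4 -> T4) : int := \det (mxsub rsel (phi \o xs) A).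

Lemma Ex_nz xs : (Ex xs != 0) =
  (#|[set xs i | i : 'I_4]| == 4)%N && U24_plus_U24 [set xs i | i : 'I_4].
Proof.
rewrite -(intr_eq0 Rdefinitions.R) /Ex.
have -> : (\det (mxsub rsel (phi \o xs) A))%:~R = \det (map_mx intr (mxsub rsel (phi \o xs) A)) :> Rdefinitions.R.
  by rewrite det_map_mx.
rewrite map_mxsub -unitfE -unitmxE -row_free_unit /row_free rank_sel //.
rewrite rank_img U_rk.
have h1 := rk_le B^T (phi @: [set xs i | i : 'I_4]).
rewrite (card_imset _ phi_inj) in h1.
have h2 := card4_le xs.
set r := rk _ _ in h1 *; set c := #|_| in h1 h2 *.
apply/idP/idP => [/eqP hr|/andP[/eqP hc /eqP hr]]; last by apply/eqP; lia.
apply/andP; split; apply/eqP; lia.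
Qed.

Hypothesis HD : forall g : 'I_4 -> 'I_n, injective g -> `|\det (mxsub rsel g A)| <= 2%:Z.

Lemma Ex_bound xs : Ex xs != 0 -> `|Ex xs| <= 2.
Proof.
move=> H; have := H; rewrite Ex_nz => /andP[hc _].
apply: HD; apply: inj_comp phi_inj _.
have hc' : #|[set xs i | i : 'I_4]| == #|'I_4| by rewrite card_ord.
move/imset_injP: hc' => hinj x y; exact: hinj.
Qed.

Definition E4 (x0 x1 x2 x3 : T4) := Ex (tnth [tuple x0; x1; x2; x3]).
Definition cv (x : T4) : nat -> int := fun i => A (rsel (inord i)) (phi x).

Lemma E4_Ef x0 x1 x2 x3 : E4 x0 x1 x2 x3 = Ef (cv x0) (cv x1) (cv x2) (cv x3).
Proof.
rewrite /E4 /Ex (@det4E _ _ (fun i j => (match j with 0%N => cv x0 | 1%N => cv x1 | 2%N => cv x2 | _ => cv x3 end) i)) //.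
move=> i j; rewrite mxE /cv /=; case: j => [[|[|[|[|j]]]] Hj] //=; by rewrite inord_val.
Qed.

Definition Eab a b t u := E4 (inl a) (inl b) (inr t) (inr u).

Lemma Eab_nz a b t u : a != b -> t != u -> Eab a b t u != 0.
Proof.
move=> hab htu; rewrite /Eab /E4 Ex_nz set4E U_E card_lr lft4 rgt4 !cards2 hab htu.
by [].
Qed.

Lemma zero3 a t b c : E4 (inl a) (inr t) (inl b) (inl c) = 0.
Proof.
apply/eqP; apply: contraT; rewrite /E4 Ex_nz set4E U_E card_lr => /andP[hc /andP[hl _]].
have e : rgt [set inl a; inr t; inl b; inl c] = [set t].
  by apply/setP => x; rewrite !inE !eqsE !orbF.
move: hc hl; rewrite e cards1; lia.
Qed.

Lemma part1_false : False.
Proof.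
apply: (@comb_false Eab o0 o1 o2 o3 isT isT isT isT isT isT).
- by move=> a b t u; rewrite /Eab !E4_Ef Ef_swap01.
- by move=> a b t u; rewrite /Eab !E4_Ef Ef_swap23.
- move=> a b t u hab htu; split; first exact: Eab_nz.
  by apply: Ex_bound; exact: Eab_nz.
- move=> a b c t u v.
  have P := Ef_plucker (cv (inl a)) (cv (inr t)) (cv (inl b)) (cv (inl c)) (cv (inr v)) (cv (inr u)).
  have Z := zero3 a t b c; rewrite E4_Ef in Z.
  rewrite Z mul0r sub0r in P.
  rewrite (Ef_swap12 (cv (inl a)) (cv (inl b)) (cv (inr t)) (cv (inr v))) in P.
  rewrite (Ef_swap12 (cv (inl a)) (cv (inl c)) (cv (inr t)) (cv (inr u))) in P.
  rewrite (Ef_swap12 (cv (inl a)) (cv (inl b)) (cv (inr t)) (cv (inr u))) in P.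
  rewrite (Ef_swap12 (cv (inl a)) (cv (inl c)) (cv (inr t)) (cv (inr v))) in P.
  rewrite /Eab !E4_Ef; move: P.
  set x := Ef _ _ _ (cv (inr v)); set y := Ef _ (cv (inl c)) _ (cv (inr u)).
  set z := Ef (cv (inl a)) (cv (inl b)) _ (cv (inr u)); set w := Ef (cv (inl a)) (cv (inl c)) _ (cv (inr v)) => P.
  apply/eqP; rewrite -subr_eq0 -oppr_eq0; apply/eqP; rewrite -P; ring.
- move=> t u; have P := Ef_plucker (cv (inr t)) (cv (inr u)) (cv (inl o0)) (cv (inl o1)) (cv (inl o2)) (cv (inl o3)).
  rewrite !(Ef_rot _ _ (cv (inr t)) (cv (inr u))) in P.
  by rewrite /Eab !E4_Ef.
- move=> a b; have P := Ef_plucker (cv (inl a)) (cv (inl b)) (cv (inr o0)) (cv (inr o1)) (cv (inr o2)) (cv (inr o3)).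
  by rewrite /Eab !E4_Ef.
Qed.

End Sel.
End Part1.

Lemma set5E (x0 x1 x2 x3 x4 : T4) :
  [set tnth [tuple x0; x1; x2; x3; x4] i | i : 'I_5] = x4 |: [set x0; x1; x2; x3].
Proof.
apply/setP => y; rewrite !inE; apply/imsetP/idP.
  by case=> -[[|[|[|[|[|i]]]]] Hi] //= _ ->; rewrite /tnth /= eqxx ?orbT.
case/orP => [/eqP ->|]; first by exists (@Ordinal 5 4 isT).
by case/orP => [/orP[/orP[]|]|] /eqP ->;
  [exists (@Ordinal 5 0 isT)|exists (@Ordinal 5 1 isT)|exists (@Ordinal 5 2 isT)|exists (@Ordinal 5 3 isT)].
Qed.

Section Rank4.
Variables (m n : nat) (A : 'M[int]_(m,n)) (phi : T4 -> 'I_n).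
Hypothesis phi_bij : bijective phi.
Hypothesis HI : forall X, U24_plus_U24 X = real_vector_matroid A (phi @: X).
Local Notation B := (map_mx (intr : int -> Rdefinitions.R) A).

Lemma rank4 : \rank B = 4%N.
Proof.
have phi_inj := bij_inj phi_bij.
pose xs0 := tnth [tuple inl o0; inl o1; inr o0; inr o1].
pose Z0 : {set T4} := [set inl o0; inl o1; inr o0; inr o1].
have hZ0 : #|Z0| = 4%N by rewrite card_lr lft4 rgt4 !cards2.
have hU0 : U24_plus_U24 Z0 by rewrite U_E lft4 rgt4 !cards2.
have hr0 : \rank (rowsub (phi \o xs0) B^T) = 4%N.
  rewrite rank_img set4E; move: hU0; rewrite (U_rk phi_inj HI) hZ0.
  by move/eqP.
rewrite -mxrank_tr; apply/eqP; rewrite eqn_leq; apply/andP; split; last first.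
  by rewrite -hr0 mxrankS // rowsub_sub.
rewrite -hr0 mxrankS //.
apply/row_subP => j.
case: phi_bij => psi h1 h2.
pose x := psi j; have hj : j = phi x by rewrite /x h2.
case: (boolP (x \in Z0)) => hx.
  rewrite /Z0 -set4E in hx; case/imsetP: hx => i _ hxi.
  by rewrite hj hxi -(row_rowsub (phi \o xs0)) row_sub.
pose xs5 := tnth [tuple inl o0; inl o1; inr o0; inr o1; x].
have hZ5 : [set xs5 i | i : 'I_5] = x |: Z0 by rewrite set5E.
have hc5 : #|x |: Z0| = 5%N by rewrite cardsU1 hx hZ0.
have hU5 : ~~ U24_plus_U24 (x |: Z0).
  rewrite U_E; move: hc5; rewrite card_lr; lia.
have hr5 : (\rank (rowsub (phi \o xs5) B^T) <= 4)%N.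
  rewrite rank_img hZ5.
  have hle := rk_le B^T (phi @: (x |: Z0)); rewrite (card_imset _ phi_inj) hc5 in hle.
  move: hU5; rewrite (U_rk phi_inj HI) hc5 => /eqP hne.
  move: hle hne; set r := rk _ _; move=> hle hne. lia.
have hsub : (rowsub (phi \o xs0) B^T <= rowsub (phi \o xs5) B^T)%MS.
  apply: rowsub_le => i; exists (widen_ord (leqnSn 4) i).
  by case: i => [[|[|[|[|i]]]] Hi].
have heq := mxrank_leqif_sup hsub.
have hback : (rowsub (phi \o xs5) B^T <= rowsub (phi \o xs0) B^T)%MS.
  rewrite -heq.2; apply/eqP; move: (heq.1); lia.
apply: submx_trans hback.
have -> : j = (phi \o xs5) (@Ordinal 5 4 isT) by rewrite hj.
by rewrite -row_rowsub row_sub.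
Qed.
End Rank4.

Lemma part1 : ~ in_M2 U24_plus_U24.
Proof.
case=> m [n [A [HD [phi [phi_bij HI]]]]].
have phi_inj := bij_inj phi_bij.
have r4 := rank4 phi_bij HI.
pose B := map_mx (intr : int -> Rdefinitions.R) A.
have core : forall r, r = 4%N -> forall rsel : 'I_r -> 'I_m, injective rsel ->
   (B <= rowsub rsel B)%MS ->
   (forall (f : 'I_r -> 'I_m) (g : 'I_r -> 'I_n), injective f -> injective g ->
       `|\det (mxsub f g A)| <= 2%:Z) -> False.
  move=> r -> rsel hinj hs hd.
  apply: (part1_false phi_inj HI hs) => g hg; exact: hd hinj hg.
apply: (core _ r4 (maxrankfun B) (@maxrankfun_inj _ _ _ B)).
  by rewrite eq_maxrowsub submx_refl.
exact: HD.
Qed.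

Definition kv (c p : nat) : int :=
  match c, p with
  | 1%N, 0%N => 1 | 2%N, 1%N => 1 | 3%N, 0%N => 1 | 3%N, 1%N => 1 | 4%N, 0%N => 1 | 4%N, 1%N => -1
  | 5%N, 2%N => 1 | 6%N, 3%N => 1 | 7%N, 2%N => 1 | 7%N, 3%N => 1 | 8%N, 2%N => 1 | 8%N, 3%N => -1
  | _, _ => 0 end.
Definition cap3 (i : nat) : nat := match i with 0%N => 0%N | 1%N => 1%N | 2%N => 2%N | _ => 3%N end.
Definition kindS (r : nat) (s : bool) (i : nat) : nat :=
  if r == 0%N then 0%N else ((if s then 5 else 1) + (if r == 1%N then 0 else cap3 i))%N.
Definition uu (r i q : nat) : int := kv (kindS r false i) q.
Definition off (s : bool) : nat := if s then 2%N else 0%N.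

Lemma kv_other r s i (p : nat) : (p < 4)%N -> (p < 2)%N = s -> kv (kindS r s i) p = 0.
Proof.
rewrite /kindS; case: r => [|[|r]]; case: s; case: i => [|[|[|i]]];
  case: p => [|[|[|[|p]]]] //.
Qed.

Lemma kv_same r s i q : (q < 2)%N -> kv (kindS r s i) (off s + q) = uu r i q.
Proof.
rewrite /uu /kindS /off; case: r => [|[|r]]; case: s; case: i => [|[|[|i]]];
  case: q => [|[|q]] //.
Qed.

Lemma uu_one r i : (0 < r)%N -> exists2 q, (q < 2)%N & uu r i q = 1.
Proof.
rewrite /uu /kindS; case: r => [|[|r]] // _; first by exists 0%N.
case: i => [|[|[|i]]]; [exists 0%N|exists 1%N|exists 0%N|exists 0%N] => //.
Qed.

Lemma uu1 i j q : uu 1 i q = uu 1 j q.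
Proof. by []. Qed.

Lemma uu_det i j : (i < 4)%N -> (j < 4)%N -> i != j ->
  uu 2 i 0 * uu 2 j 1 - uu 2 i 1 * uu 2 j 0 != 0.
Proof.
by case: i => [|[|[|[|i]]]] //; case: j => [|[|[|[|j]]]].
Qed.

Lemma sum1 k (F : 'I_k -> Rdefinitions.R) i0 :
  (forall i, i != i0 -> F i = 0) -> \sum_i F i = F i0.
Proof.
move=> H; rewrite (bigD1 i0) //= big1 ?addr0 // => i /H //.
Qed.

Lemma sum2 k (F : 'I_k -> Rdefinitions.R) i0 i1 : i1 != i0 ->
  (forall i, i != i0 -> i != i1 -> F i = 0) -> \sum_i F i = F i0 + F i1.
Proof.
move=> h H; rewrite (bigD1 i0) //= (bigD1 i1) //= big1 ?addr0 //.
by move=> i /andP[h1 h2]; apply: H.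
Qed.

Lemma sum3 k (F : 'I_k -> Rdefinitions.R) i0 i1 i2 : i1 != i0 -> i2 != i0 -> i2 != i1 ->
  (forall i, i != i0 -> i != i1 -> i != i2 -> F i = 0) -> \sum_i F i = F i0 + F i1 + F i2.
Proof.
move=> h1 h2 h3 H; rewrite (bigD1 i0) //= (bigD1 i1) //= (bigD1 i2) /= ?h2 ?h3 // big1 ?addr0 ?addrA //.
by move=> i /andP[/andP[a b] c]; apply: H.
Qed.


Lemma pick1 (T : finType) (S : {set T}) : (0 < #|S|)%N -> exists i0, i0 \in S.
Proof. rewrite card_gt0 => /set0Pn [x hx]; by exists x. Qed.

Lemma pick2 (T : finType) (S : {set T}) : (1 < #|S|)%N ->
  exists i0 i1, [/\ i0 \in S, i1 \in S & i1 != i0].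
Proof.
move=> h; have [i0 h0] := pick1 (ltnW h).
have : (0 < #|S :\ i0|)%N by rewrite (cardsD1 i0) h0 in h; lia.
case/pick1 => i1; rewrite !inE => /andP[h1 h1']; by exists i0, i1.
Qed.

Lemma pick3 (T : finType) (S : {set T}) : (2 < #|S|)%N ->
  exists i0 i1 i2, [/\ i0 \in S, i1 \in S, i2 \in S & [&& i1 != i0, i2 != i0 & i2 != i1]].
Proof.
move=> h; have [i0 h0] := pick1 (ltnW (ltnW h)).
have : (1 < #|S :\ i0|)%N by rewrite (cardsD1 i0) h0 in h; lia.
case/pick2 => i1 [i2 []]; rewrite !inE => /andP[h1 h1'] /andP[h2 h2'] h3.
by exists i0, i1, i2; rewrite h1' h2' h1 h2 h3.
Qed.

Lemma cover2 (T : finType) (S : {set T}) i0 : (#|S| <= 2)%N -> i0 \in S ->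
  exists i1, forall i, i \in S -> i = i0 \/ i = i1.
Proof.
move=> hS h0.
case: (set0Pn (S :\ i0)) => [[i1]|h].
  rewrite !inE => /andP[h1 h1']; exists i1 => i hi.
  case: (eqVneq i i0) => [->|n0]; first by left.
  case: (eqVneq i i1) => [->|n1]; first by right.
  have : (3 <= #|S|)%N.
    have -> : 3%N = #|i |: [set i0; i1]|.
      by rewrite cardsU1 cards2 !inE (negbTE n0) (negbTE n1) eq_sym h1.
    apply: subset_leq_card; apply/subsetP => x; rewrite !inE.
    by case/orP => [/eqP ->|/orP[] /eqP ->].
  lia.
exists i0 => i hi; left.
apply/eqP; apply: contraT => hn; exfalso; apply: h.
by exists i; rewrite !inE hn hi.
Qed.

Section IND.
Variables (k : nat) (sd : 'I_k -> bool) (ix : 'I_k -> nat) (rr : bool -> nat).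
Hypothesis Hrr : forall s, (rr s <= 2)%N.
Hypothesis Hix : forall i j, i != j -> sd i = sd j -> ix i != ix j.
Hypothesis Hix4 : forall i, (ix i < 4)%N.
Variable V : 'M[Rdefinitions.R]_(k,4).
Hypothesis HV : forall i (p : 'I_4), V i p = (kv (kindS (rr (sd i)) (sd i) (ix i)) p)%:~R.

Definition pos (s : bool) (q : nat) : 'I_4 := inord (off s + q).

Lemma pos_val s q : (q < 2)%N -> (pos s q : nat) = (off s + q)%N.
Proof. by move=> hq; rewrite /pos inordK // /off; case: s; lia. Qed.

Lemma V_same i s q : (q < 2)%N -> sd i = s -> V i (pos s q) = (uu (rr s) (ix i) q)%:~R.
Proof. by move=> hq <-; rewrite HV pos_val // kv_same. Qed.

Lemma V_other i s q : (q < 2)%N -> sd i != s -> V i (pos s q) = 0.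
Proof.
move=> hq h; rewrite HV kv_other //; rewrite pos_val // /off.
by case: s h; case: (sd i) => //= _; lia.
Qed.

Lemma V_same' i s (p : 'I_4) q : (q < 2)%N -> sd i = s -> (p : nat) = (off s + q)%N ->
  V i p = (uu (rr s) (ix i) q)%:~R.
Proof. by move=> hq <- hp; rewrite HV hp kv_same. Qed.

Lemma V_other' i (p : 'I_4) : (p < 2)%N = sd i -> V i p = 0.
Proof. by move=> h; rewrite HV kv_other. Qed.

Lemma IND_indep : (forall s, (#|[set i | sd i == s]| <= rr s)%N) ->
  forall v : 'rV_k, v *m V = 0 -> v = 0.
Proof.
move=> Hc v Hv; apply/rowP => i0; rewrite mxE.
set s := sd i0.
have Eq q : (q < 2)%N -> \sum_i v 0 i * V i (pos s q) = 0.
  by move=> hq; have := congr1 (fun M : 'M[Rdefinitions.R]_(1,4) => M 0 (pos s q)) Hv; rewrite !mxE.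
have hin : i0 \in [set i | sd i == s] by rewrite inE.
have hS := Hc s.
have [i1 Hcov] := cover2 (leq_trans hS (Hrr s)) hin.
have r0 : (0 < rr s)%N.
  by apply: leq_trans hS; rewrite card_gt0; apply/set0Pn; exists i0.
case: (boolP ((i1 != i0) && (sd i1 == s))) => [/andP[h10 /eqP hs1]|hn].
  have r2 : rr s = 2%N.
    have : (2 <= #|[set i | sd i == s]|)%N.
      have h2 : #|[set i0; i1]| = 2%N by rewrite cards2 eq_sym h10.
      rewrite -h2; apply: subset_leq_card; apply/subsetP => x.
      by rewrite !inE => /orP[] /eqP ->; rewrite ?hs1 eqxx.
    have := Hrr s; lia.
  have E q : (q < 2)%N -> v 0 i0 * (uu 2 (ix i0) q)%:~R + v 0 i1 * (uu 2 (ix i1) q)%:~R = 0.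
    move=> hq; rewrite -(Eq q hq) (sum2 h10).
      by rewrite !(V_same hq) // r2.
    move=> i h0 h1; rewrite V_other ?mulr0 //; apply/negP => /eqP hsi.
    have : i \in [set i | sd i == s] by rewrite inE hsi.
    by case/Hcov => /eqP; rewrite ?(negbTE h0) ?(negbTE h1).
  have h01 : i0 != i1 by rewrite eq_sym.
  have hd := uu_det (Hix4 i0) (Hix4 i1) (Hix h01 (esym hs1)).
  have E0 := E 0%N isT; have E1 := E 1%N isT.
  move: E0 E1 hd.
  set a0 := uu 2 (ix i0) 0; set a1 := uu 2 (ix i0) 1; set b0 := uu 2 (ix i1) 0; set b1 := uu 2 (ix i1) 1.
  move=> E0 E1 hd.
  have : v 0 i0 * (a0 * b1 - a1 * b0)%:~R = 0.
    have -> : v 0 i0 * (a0 * b1 - a1 * b0)%:~R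
       = b1%:~R * (v 0 i0 * a0%:~R + v 0 i1 * b0%:~R) - b0%:~R * (v 0 i0 * a1%:~R + v 0 i1 * b1%:~R).
      by rewrite intrD intrN !intrM; ring.
    by rewrite E0 E1; ring.
  by move/eqP; rewrite mulf_eq0 intr_eq0 (negbTE hd) orbF => /eqP.
have [q hq hu] := uu_one (ix i0) r0.
have := Eq q hq; rewrite (sum1 (i0 := i0)).
  by rewrite (V_same hq) // hu mulr1.
move=> i hi; rewrite V_other ?mulr0 //; apply/negP => /eqP hsi.
have : i \in [set i | sd i == s] by rewrite inE hsi.
case/Hcov => hi'; first by rewrite hi' eqxx in hi.
by move: hn; rewrite -hi' hsi eqxx andbT hi.
Qed.

Lemma IND_dep : (forall v : 'rV_k, v *m V = 0 -> v = 0) ->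
  forall s, (#|[set i | sd i == s]| <= rr s)%N.
Proof.
move=> H s; rewrite leqNgt; apply/negP => hgt.
have hr := Hrr s.
have hV0 : forall (c : 'I_k -> Rdefinitions.R) i0, c i0 != 0 -> (\row_i c i) *m V = 0 -> False.
  move=> c i0 hc hm; have := H _ hm => /rowP /(_ i0); rewrite !mxE => e.
  by rewrite e eqxx in hc.
case E: (rr s) hgt hr => [|[|[|r]]] // hgt _.
- have [i0 h0] := pick1 hgt; move: h0; rewrite inE => /eqP h0.
  apply: (hV0 (fun i => (i == i0)%:R) i0); first by rewrite eqxx oner_eq0.
  apply/rowP => p; rewrite !mxE (sum1 (i0 := i0)).
    by rewrite !mxE eqxx mul1r HV h0 E.
  by move=> i hi; rewrite !mxE (negbTE hi) mul0r.
- have [i0 [i1 [h0 h1 h10]]] := pick2 hgt; move: h0 h1; rewrite !inE => /eqP h0 /eqP h1.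
  apply: (hV0 (fun i => (i == i0)%:R - (i == i1)%:R) i0).
    by rewrite eqxx (eq_sym i0 i1) (negbTE h10) subr0 oner_eq0.
  apply/rowP => p; rewrite !mxE (sum2 h10).
    rewrite !mxE !eqxx (eq_sym i0 i1) (negbTE h10) subr0 sub0r mul1r mulN1r.
    by rewrite !HV h0 h1 E /kindS /= subrr.
  by move=> i hi hi'; rewrite !mxE (negbTE hi) (negbTE hi') subrr mul0r.
- have [i0 [i1 [i2 [h0 h1 h2 /and3P[h10 h20 h21]]]]] := pick3 hgt.
  move: h0 h1 h2; rewrite !inE => /eqP h0 /eqP h1 /eqP h2.
  pose u j q := uu 2 (ix j) q.
  pose al := u i1 0%N * u i2 1%N - u i1 1%N * u i2 0%N.
  pose be := - (u i0 0%N * u i2 1%N - u i0 1%N * u i2 0%N).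
  pose ga := u i0 0%N * u i1 1%N - u i0 1%N * u i1 0%N.
  pose c i : Rdefinitions.R := if i == i0 then al%:~R else if i == i1 then be%:~R else if i == i2 then ga%:~R else 0.
  apply: (hV0 c i0).
    rewrite /c eqxx intr_eq0; apply: uu_det; rewrite ?Hix4 //.
    by apply: Hix; rewrite ?h1 ?h2 // eq_sym.
  apply/rowP => p; rewrite !mxE (sum3 h10 h20 h21); last first.
    by move=> i a b d; rewrite /c !mxE (negbTE a) (negbTE b) (negbTE d) mul0r.
  rewrite !mxE /c eqxx (negbTE h10) (negbTE h20) (negbTE h21) eqxx eqxx.
  case: (boolP ((p < 2)%N == s)) => hp.
    by rewrite !V_other' ?mulr0 ?addr0 // ?h0 ?h1 ?h2 (eqP hp).
  have [q hq hpq] : exists2 q, (q < 2)%N & (p : nat) = (off s + q)%N.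
    move: hp; rewrite /off; clear; case: s; case: p => [[|[|[|[|p]]]] Hp] //= _;
      first [by exists 0%N | by exists 1%N].
  rewrite !(V_same' hq _ hpq) // E -!intrM -!intrD.
  apply/eqP; rewrite intr_eq0; apply/eqP; rewrite /al /be /ga /u.
  case: q hq {hpq} => [|[|q]] // _; ring.
Qed.

Lemma IND : (forall v : 'rV_k, v *m V = 0 -> v = 0) <->
  (forall s, (#|[set i | sd i == s]| <= rr s)%N).
Proof. split; [exact: IND_dep | exact: IND_indep]. Qed.

End IND.

Definition d4 (B : nat -> nat -> int) : int :=
    B 0 0 * (B 1 1 * (B 2 2 * B 3 3 - B 2 3 * B 3 2) - B 1 2 * (B 2 1 * B 3 3 - B 2 3 * B 3 1) + B 1 3 * (B 2 1 * B 3 2 - B 2 2 * B 3 1))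
  - B 0 1 * (B 1 0 * (B 2 2 * B 3 3 - B 2 3 * B 3 2) - B 1 2 * (B 2 0 * B 3 3 - B 2 3 * B 3 0) + B 1 3 * (B 2 0 * B 3 2 - B 2 2 * B 3 0))
  + B 0 2 * (B 1 0 * (B 2 1 * B 3 3 - B 2 3 * B 3 1) - B 1 1 * (B 2 0 * B 3 3 - B 2 3 * B 3 0) + B 1 3 * (B 2 0 * B 3 1 - B 2 1 * B 3 0))
  - B 0 3 * (B 1 0 * (B 2 1 * B 3 2 - B 2 2 * B 3 1) - B 1 1 * (B 2 0 * B 3 2 - B 2 2 * B 3 0) + B 1 2 * (B 2 0 * B 3 1 - B 2 1 * B 3 0)).
Definition d3 (B : nat -> nat -> int) : int :=
  B 0 0 * (B 1 1 * B 2 2 - B 1 2 * B 2 1)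
         - B 0 1 * (B 1 0 * B 2 2 - B 1 2 * B 2 0)
         + B 0 2 * (B 1 0 * B 2 1 - B 1 1 * B 2 0).
Definition d2 (B : nat -> nat -> int) : int := B 0 0 * B 1 1 - B 0 1 * B 1 0.

Definition tup4 (a0 a1 a2 a3 : nat) (i : nat) : nat :=
  match i with 0%N => a0 | 1%N => a1 | 2%N => a2 | _ => a3 end.

Definition L1 : seq nat := [:: 0; 1; 2; 3; 4; 5; 6; 7]%N.
Definition L2 : seq nat := [:: 0; 1; 2; 3; 5; 6; 7; 8]%N.

Definition inner4 (L : seq nat) (a0 a1 a2 a3 : nat) : bool :=
   all (fun c0 => all (fun c1 => all (fun c2 => all (fun c3 =>
     `|d4 (fun i j => kv (tup4 c0 c1 c2 c3 j) (tup4 a0 a1 a2 a3 i))| <= 2)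
   L) L) L) L.
Definition check4 (L : seq nat) : bool :=
  all (fun a0 => all (fun a1 => all (fun a2 => all (fun a3 =>
   if uniq [:: a0; a1; a2; a3] then inner4 L a0 a1 a2 a3 else true)
  (iota 0 4)) (iota 0 4)) (iota 0 4)) (iota 0 4).

Definition inner3 (L : seq nat) (a0 a1 a2 : nat) : bool :=
   all (fun c0 => all (fun c1 => all (fun c2 =>
     `|d3 (fun i j => kv (tup4 c0 c1 c2 0 j) (tup4 a0 a1 a2 0 i))| <= 2)
   L) L) L.
Definition check3 (L : seq nat) : bool :=
  all (fun a0 => all (fun a1 => all (fun a2 =>
   if uniq [:: a0; a1; a2] then inner3 L a0 a1 a2 else true)
  (iota 0 4)) (iota 0 4)) (iota 0 4).

Definition check2 (L : seq nat) : bool :=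
  all (fun a0 => all (fun a1 =>
   all (fun c0 => all (fun c1 =>
     `|d2 (fun i j => kv (tup4 c0 c1 0 0 j) (tup4 a0 a1 0 0 i))| <= 2)
   L) L)
  (iota 0 4)) (iota 0 4).

Lemma check4_L1 : check4 L1. Proof. vm_compute. by []. Qed.
Lemma check4_L2 : check4 L2. Proof. vm_compute. by []. Qed.
Lemma check3_L1 : check3 L1. Proof. vm_compute. by []. Qed.
Lemma check3_L2 : check3 L2. Proof. vm_compute. by []. Qed.
Lemma check2_L1 : check2 L1. Proof. vm_compute. by []. Qed.
Lemma check2_L2 : check2 L2. Proof. vm_compute. by []. Qed.

Lemma kv_bound c p : `|kv c p| <= 1.
Proof.
by case: c => [|[|[|[|[|[|[|[|[|c]]]]]]]]]; case: p => [|[|[|[|p]]]].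
Qed.

Lemma mem_iota4 (x : 'I_4) : (x : nat) \in iota 0 4.
Proof. by rewrite mem_iota /= ltn_ord. Qed.

Lemma delta_gen (L : seq nat) (HL : L = L1 \/ L = L2) r (M : 'M[int]_r)
  (aa : 'I_r -> 'I_4) (cc : 'I_r -> nat) :
  injective aa -> (forall j, cc j \in L) -> (forall i j, M i j = kv (cc j) (aa i)) ->
  `|\det M| <= 2.
Proof.
move=> hinj hL HM.
have hr : (r <= 4)%N by have := leq_card aa hinj; rewrite !card_ord.
have c4 : check4 L by case: HL => ->; [exact: check4_L1 | exact: check4_L2].
have c3 : check3 L by case: HL => ->; [exact: check3_L1 | exact: check3_L2].
have c2 : check2 L by case: HL => ->; [exact: check2_L1 | exact: check2_L2].
have ninj : forall x y, (val (aa x) == val (aa y)) = (x == y).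
  by move=> x y; rewrite val_eqE (inj_eq hinj).
move: hr M aa cc hinj hL HM ninj; case: r => [|[|[|[|[|r]]]]] // _ M aa cc hinj hL HM ninj.
- by rewrite det_mx00 normr1.
- rewrite det_mx11 HM; apply: le_trans (kv_bound _ _) _; by [].
- pose B := fun i j : nat => kv (cc (inord j)) (aa (inord i)).
  rewrite (@det2E _ _ B); last by move=> i j; rewrite HM /B !inord_val.
  move/allP: c2 => /(_ _ (mem_iota4 (aa (inord 0))))/allP/(_ _ (mem_iota4 (aa (inord 1)))).
  move/allP/(_ _ (hL (inord 0)))/allP/(_ _ (hL (inord 1))).
  by [].
- pose B := fun i j : nat => kv (cc (inord j)) (aa (inord i)).
  rewrite (@det3E _ _ B); last by move=> i j; rewrite HM /B !inord_val.
  move/allP: c3 => /(_ _ (mem_iota4 (aa (inord 0))))/allP/(_ _ (mem_iota4 (aa (inord 1)))).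
  move/allP/(_ _ (mem_iota4 (aa (inord 2)))).
  rewrite /= !inE !ninj -!val_eqE /= !inordK //= /inner3.
  move/allP/(_ _ (hL (inord 0)))/allP/(_ _ (hL (inord 1)))/allP/(_ _ (hL (inord 2))).
  by [].
- pose B := fun i j : nat => kv (cc (inord j)) (aa (inord i)).
  rewrite (@det4E _ _ B); last by move=> i j; rewrite HM /B !inord_val.
  move/allP: c4 => /(_ _ (mem_iota4 (aa (inord 0))))/allP/(_ _ (mem_iota4 (aa (inord 1)))).
  move/allP/(_ _ (mem_iota4 (aa (inord 2))))/allP/(_ _ (mem_iota4 (aa (inord 3)))).
  rewrite /= !inE !ninj -!val_eqE /= !inordK //= /inner4.
  move/allP/(_ _ (hL (inord 0)))/allP/(_ _ (hL (inord 1)))/allP/(_ _ (hL (inord 2))).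
  move/allP/(_ _ (hL (inord 3))).
  by [].
Qed.

Lemma lft_sub (Z Z' : {set T4}) : Z \subset Z' -> lft Z \subset lft Z'.
Proof. by move/subsetP => h; apply/subsetP => a; rewrite !inE => /h. Qed.
Lemma rgt_sub (Z Z' : {set T4}) : Z \subset Z' -> rgt Z \subset rgt Z'.
Proof. by move/subsetP => h; apply/subsetP => a; rewrite !inE => /h. Qed.
Lemma lftU (Z Z' : {set T4}) : lft (Z :|: Z') = lft Z :|: lft Z'.
Proof. by apply/setP => a; rewrite !inE. Qed.
Lemma rgtU (Z Z' : {set T4}) : rgt (Z :|: Z') = rgt Z :|: rgt Z'.
Proof. by apply/setP => a; rewrite !inE. Qed.
Lemma lft1 (a : 'I_4) : lft [set inl a] = [set a].
Proof. by apply/setP => x; rewrite !inE eqsE. Qed.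
Lemma rgt1l (a : 'I_4) : rgt [set inl a] = set0.
Proof. by apply/setP => x; rewrite !inE eqsE. Qed.
Lemma lft1r (a : 'I_4) : lft [set inr a] = set0.
Proof. by apply/setP => x; rewrite !inE eqsE. Qed.
Lemma rgt1 (a : 'I_4) : rgt [set inr a] = [set a].
Proof. by apply/setP => x; rewrite !inE eqsE. Qed.

Lemma cards_disjU (T : finType) (A B : {set T}) : A :&: B = set0 -> #|A :|: B| = (#|A| + #|B|)%N.
Proof. by move=> h; rewrite cardsU h cards0 subn0. Qed.

Section Minor.
Variables C D : {set T4}.
Local Notation I := U24_plus_U24.

Lemma maxB (B : {set T4}) : B \subset C -> I B ->
  (forall B' : {set T4}, [&& B \subset B', B' \subset C & I B'] -> B' = B) ->
  #|lft B| = minn 2 #|lft C| /\ #|rgt B| = minn 2 #|rgt C|.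
Proof.
move=> hBC hIB hmax; move: (hIB); rewrite U_E => /andP[hl hr].
split.
- have h1 := subset_leq_card (lft_sub hBC).
  suff : ~ (#|lft B| < minn 2 #|lft C|)%N by lia.
  move=> hlt.
  have : ~~ (lft C \subset lft B).
    apply/negP => hs; have := subset_leq_card hs; lia.
  case/subsetPn => a haC haB.
  have hB' : inl a |: B = B.
    apply: hmax; rewrite subsetUr /=; apply/andP; split.
      by rewrite subUset sub1set hBC andbT; move: haC; rewrite inE.
    rewrite U_E lftU rgtU lft1 rgt1l set0U cardsU1 haB.
    by apply/andP; split => //; lia.
  by move: haB; rewrite inE -hB' !inE eqxx.
- have h1 := subset_leq_card (rgt_sub hBC).
  suff : ~ (#|rgt B| < minn 2 #|rgt C|)%N by lia.
  move=> hlt.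
  have : ~~ (rgt C \subset rgt B).
    apply/negP => hs; have := subset_leq_card hs; lia.
  case/subsetPn => a haC haB.
  have hB' : inr a |: B = B.
    apply: hmax; rewrite subsetUr /=; apply/andP; split.
      by rewrite subUset sub1set hBC andbT; move: haC; rewrite inE.
    rewrite U_E lftU rgtU rgt1 lft1r set0U cardsU1 haB.
    by apply/andP; split => //; lia.
  by move: haB; rewrite inE -hB' !inE eqxx.
Qed.

Lemma exB : exists B : {set T4}, [&& B \subset C, I B &
  [forall B' : {set T4}, [&& B \subset B', B' \subset C & I B'] ==> (B' == B)]].
Proof.
have h0 : (set0 \subset C) && I set0.
  have l0 : lft set0 = set0 by apply/setP => x; rewrite !inE.
  have r0 : rgt set0 = set0 by apply/setP => x; rewrite !inE.
  by rewrite sub0set U_E l0 r0 cards0.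
case: (@arg_maxnP _ set0 (fun B : {set T4} => (B \subset C) && I B) (fun B : {set T4} => #|B|) h0) => B /andP[hBC hIB] hmax.
exists B; rewrite hBC hIB /=; apply/forallP => B'; apply/implyP => /and3P[h1 h2 h3].
have := hmax B' (introT andP (conj h2 h3)).
by move=> hc; rewrite eq_sym eqEcard h1 /=; exact: hc.
Qed.

Local Notation G := (minor_ground C D).

Lemma minorE (X : {set G}) : minor I C D X =
  (#|lft [set val x | x in X]| + minn 2 #|lft C| <= 2)%N &&
  (#|rgt [set val x | x in X]| + minn 2 #|rgt C| <= 2)%N.
Proof.
set V := [set val x | x in X].
have hV : forall x, x \in V -> x \notin C.
  move=> x /imsetP [y _ ->]; have := valP y; rewrite inE negb_or; by case/andP.
have card_split : forall B : {set T4}, B \subset C ->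
    #|lft (V :|: B)| = (#|lft V| + #|lft B|)%N /\ #|rgt (V :|: B)| = (#|rgt V| + #|rgt B|)%N.
  move=> B hBC; rewrite lftU rgtU; split; apply: cards_disjU; apply/setP => a; rewrite !inE;
    apply/negP => /andP[h1 h2]; have := hV _ h1; by rewrite (subsetP hBC _ h2).
rewrite /minor; apply/existsP/idP.
  case=> B /and4P[hBC hIB /forallP hmax hI'].
  have [e1 e2] := maxB hBC hIB (fun B' h => eqP (implyP (hmax B') h)).
  have [c1 c2] := card_split B hBC.
  move: hI'; rewrite -/V U_E c1 c2 e1 e2; by [].
move=> hc; case: exB => B /and3P[hBC hIB hmax]; exists B.
rewrite hBC hIB hmax /=.
have [e1 e2] := maxB hBC hIB (fun B' h => eqP (implyP (forallP hmax B') h)).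
have [c1 c2] := card_split B hBC.
by rewrite -/V U_E c1 c2 e1 e2.
Qed.

End Minor.

Section Rep.
Variables C D : {set T4}.
Local Notation G := (minor_ground C D).
Definition sv (x : T4) : bool := x \notin C :|: D.
Definition rL := (2 - minn 2 #|lft C|)%N.
Definition rR := (2 - minn 2 #|rgt C|)%N.
Definition rrf (s : bool) := if s then rR else rL.
Definition idxL (a : 'I_4) := #|[set b : 'I_4 | (b < a)%N && sv (inl b)]|.
Definition idxR (a : 'I_4) := #|[set b : 'I_4 | (b < a)%N && sv (inr b)]|.
Definition ixf (x : T4) := match x with inl a => idxL a | inr a => idxR a end.
Definition isr (x : T4) := ~~ isl x.
Definition kind (x : T4) := kindS (rrf (isr x)) (isr x) (ixf x).
Definition Am : 'M[int]_(4, #|{: G}|) := \matrix_(p, j) kv (kind (val (enum_val j))) p.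

Lemma idx_set_lt (P : pred 'I_4) (a : 'I_4) : (#|[set b : 'I_4 | (b < a)%N && P b]| < 4)%N.
Proof.
have h : #|[set: 'I_4]| = 4%N by rewrite cardsT card_ord.
apply: (leq_trans _ (eq_leq h)); apply: proper_card; apply/properP; split; first exact: subsetT.
by exists a; rewrite !inE ?ltnn.
Qed.

Lemma idx_set_inj (P : pred 'I_4) (a b : 'I_4) : P a -> P b -> a != b ->
  #|[set c : 'I_4 | (c < a)%N && P c]| != #|[set c : 'I_4 | (c < b)%N && P c]|.
Proof.
move=> pa pb hab.
have key : forall x y : 'I_4, P x -> (x < y)%N ->
    (#|[set c : 'I_4 | (c < x)%N && P c]| < #|[set c : 'I_4 | (c < y)%N && P c]|)%N.
  move=> x y px hxy; apply: proper_card; apply/properP; split.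
    by apply/subsetP => c; rewrite !inE => /andP[h1 ->]; rewrite (ltn_trans h1 hxy).
  by exists x; rewrite !inE ?ltnn // hxy px.
case: (ltngtP a b) => h.
- by rewrite neq_ltn (key a b pa h).
- by rewrite neq_ltn (key b a pb h) orbT.
- by move: hab; rewrite (val_inj h) eqxx.
Qed.

Lemma idx_set_small (P : pred 'I_4) (a b : 'I_4) : P a -> ~~ P b ->
  (#|[set c : 'I_4 | (c < a)%N && P c]| <= 2)%N.
Proof.
move=> pa pb.
have hab : a != b by apply: contraNneq pb => <-.
have : (#|[set c : 'I_4 | (c < a)%N && P c]| <= #|[set: 'I_4] :\ a :\ b|)%N.
  apply: subset_leq_card; apply/subsetP => c; rewrite !inE => /andP[h1 h2].
  rewrite andbT; apply/andP; split.
    by apply: contraTneq h2 => ->.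
  by apply: contraTneq h1 => ->; rewrite ltnn.
have c1 : #|[set: 'I_4] :\ a| = 3%N.
  by move: (cardsD1 a [set: 'I_4]); rewrite in_setT cardsT card_ord add1n => /eqP; rewrite eqSS => /eqP <-.
have c2 : #|[set: 'I_4] :\ a :\ b| = 2%N.
  by move: (cardsD1 b ([set: 'I_4] :\ a)); rewrite !inE andbT (eq_sym b a) hab c1 add1n => /eqP; rewrite eqSS => /eqP <-.
by rewrite c2.
Qed.

Lemma kind_lt9 x : (kind x < 9)%N.
Proof.
rewrite /kind /kindS; case: (rrf _) => [|[|r]]; case: (isr x); case: (ixf x) => [|[|[|i]]] //.
Qed.

Lemma kindS_4 r s i : kindS r s i = 4%N -> s = false /\ (3 <= i)%N.
Proof. by rewrite /kindS; case: r => [|[|r]]; case: s; case: i => [|[|[|i]]]. Qed.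
Lemma kindS_8 r s i : kindS r s i = 8%N -> s = true /\ (3 <= i)%N.
Proof. by rewrite /kindS; case: r => [|[|r]]; case: s; case: i => [|[|[|i]]]. Qed.

Lemma kind4 x : sv x -> kind x = 4%N -> forall b, sv (inl b).
Proof.
move=> hx /kindS_4 [hs hi] b; case: x hx hs hi => a //= hx _ hi.
apply: contraT => hb.
have : (idxL a <= 2)%N := @idx_set_small (fun c => sv (inl c)) a b hx hb.
lia.
Qed.

Lemma kind8 x : sv x -> kind x = 8%N -> forall b, sv (inr b).
Proof.
move=> hx /kindS_8 [hs hi] b; case: x hx hs hi => a //= hx _ hi.
apply: contraT => hb.
have : (idxR a <= 2)%N := @idx_set_small (fun c => sv (inr c)) a b hx hb.
lia.
Qed.

Lemma Am_delta : C :|: D != set0 -> Delta_modular 2 Am.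
Proof.
move=> hCD; rewrite /Delta_modular => f g hf _.
pose cc := fun j => kind (val (enum_val (g j))).
have HM : forall i j, mxsub f g Am i j = kv (cc j) (f i) by move=> i j; rewrite !mxE.
have svj : forall j, sv (val (enum_val (g j))) := fun j => valP (enum_val (g j)).
case: (boolP [exists b : 'I_4, ~~ sv (inl b)]) => hL.
  apply: (@delta_gen L2 (or_intror erefl) _ _ f cc hf _ HM) => j; rewrite /cc.
  have h9 := kind_lt9 (val (enum_val (g j))).
  have h4 : kind (val (enum_val (g j))) != 4%N.
    apply/eqP => e; case/existsP: hL => b; by rewrite (kind4 (svj j) e b).
  move: h9 h4; case: (kind _) => [|[|[|[|[|[|[|[|[|c]]]]]]]]] //.
case/set0Pn: hCD => x hx.
have hb : ~~ sv x by rewrite /sv hx.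
case: x hx hb => b hx hb.
  by move: hL; rewrite negb_exists => /forallP /(_ b); rewrite negbK (negbTE hb).
apply: (@delta_gen L1 (or_introl erefl) _ _ f cc hf _ HM) => j; rewrite /cc.
have h9 := kind_lt9 (val (enum_val (g j))).
have h8 : kind (val (enum_val (g j))) != 8%N.
  by apply/eqP => e; move: hb; rewrite (kind8 (svj j) e b).
move: h9 h8; case: (kind _) => [|[|[|[|[|[|[|[|[|c]]]]]]]]] //.
Qed.

Lemma Am_iso (X : {set G}) :
  minor U24_plus_U24 C D X = real_vector_matroid Am (enum_rank @: X).
Proof.
rewrite minorE rvm_rank.
set Y := enum_rank @: X.
set N := (map_mx (intr : int -> Rdefinitions.R) Am)^T.
set V := [set val y | y in X].
pose e := fun i : 'I_#|Y| => val (enum_val (enum_val i : 'I_#|{: G}|)).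
have e_inj : injective e.
  by move=> i j /val_inj /enum_val_inj /enum_val_inj.
have e_img : forall x, (x \in V) = [exists i, e i == x].
  move=> x; apply/imsetP/existsP.
    case=> y hy ->.
    have hY : enum_rank y \in Y by apply: imset_f.
    by exists (enum_rank_in hY (enum_rank y)); rewrite /e enum_rankK_in // enum_rankK.
  case=> i /eqP <-.
  have := enum_valP i; case/imsetP => y hy hyi.
  by exists y => //; rewrite /e hyi enum_rankK.
have gen : forall P : pred T4, #|[set i | P (e i)]| = #|[set x in V | P x]|.
  move=> P; rewrite -(card_imset _ e_inj); apply: eq_card => x.
  rewrite inE e_img; apply/imsetP/andP.
    case=> i; rewrite inE => hi ->; split => //; apply/existsP; by exists i.
  by case=> /existsP [i /eqP hi] hP; exists i => //; rewrite inE hi.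
have cnt : forall s, #|[set i | isr (e i) == s]| =
    if s then #|rgt V| else #|lft V|.
  move=> s; rewrite (gen (fun x => isr x == s)).
  case: s.
    rewrite -(card_imset _ inr_inj'); apply: eq_card => x.
    rewrite !inE; case: x => a /=.
      by rewrite andbF; apply/esym/imsetP => -[b _].
    by rewrite andbT (mem_imset _ _ inr_inj') inE.
  rewrite -(card_imset _ inl_inj'); apply: eq_card => x.
  rewrite !inE; case: x => a /=.
    by rewrite andbT (mem_imset _ _ inl_inj') inE.
  by rewrite andbF; apply/esym/imsetP => -[b _].
have HV : forall i p, (rowsub (fun i : 'I_#|Y| => enum_val i) N) i p =
    (kv (kindS (rrf (isr (e i))) (isr (e i)) (ixf (e i))) p)%:~R.
  by move=> i p; rewrite !mxE.
have Hrr : forall s, (rrf s <= 2)%N by case; rewrite /rrf /rL /rR leq_subr.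
have Hix : forall i j, i != j -> isr (e i) = isr (e j) -> ixf (e i) != ixf (e j).
  move=> i j hij hs.
  have hne : e i != e j by rewrite (inj_eq e_inj).
  have svi : sv (e i) := valP _.
  have svj : sv (e j) := valP _.
  move: hne hs svi svj; case: (e i) => a; case: (e j) => b //= hne _ sa sb.
    by apply: (@idx_set_inj (fun c => sv (inl c))).
  by apply: (@idx_set_inj (fun c => sv (inr c))).
have Hix4 : forall i, (ixf (e i) < 4)%N.
  by move=> i; case: (e i) => a; apply: idx_set_lt.
have key := IND Hrr Hix Hix4 HV.
rewrite /rk -/N.
apply/idP/idP.
  move=> /andP[h1 h2]; apply/(rank_full_rows _); apply/key; case;
    rewrite cnt /rrf /rR /rL; lia.
move=> /(rank_full_rows _) /key H.
have := H false; have := H true; rewrite !cnt /rrf /rR /rL => ha hb.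
apply/andP; split; lia.
Qed.

End Rep.

Lemma part2 : forall C D : {set 'I_4 + 'I_4},
     [disjoint C & D] -> C :|: D != set0 ->
     in_M2 (minor U24_plus_U24 C D).
Proof.
move=> C D _ hCD.
exists 4%N, #|{: minor_ground C D}|, (Am C D); split; first exact: Am_delta.
exists enum_rank; split; first exact: enum_rank_bij.
exact: Am_iso.
Qed.


Theorem proposition4p3 :
  ~ in_M2 U24_plus_U24 /\
  (forall C D : {set 'I_4 + 'I_4},
     [disjoint C & D] -> C :|: D != set0 ->
     in_M2 (minor U24_plus_U24 C D)).
Proof. split; [exact: part1 | exact: part2]. Qed.
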